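(* Let $S'$ be a martingale on $2^{<\omega}$ with $\mathrm{Var}(S'\mid\bot)<\infty$, and let $c>S'(\bot)$. Then for every real $\hat c\ge 0$ there exists a martingale $S$ such that $S(\bot)<c$, $S(\rho)>S'(\rho)$ for all $\rho\in2^{<\omega}$, and for some $t\in\omega$, $S(\rho)>S'(\rho)+\hat c\sqrt{\mathrm{Var}(S'\mid\rho)}$ for all $\rho\in 2^t$.
   Context: A martingale is a function $S:2^{<\omega}\to\mathbb{R}^{\ge0}$ with $2S(\rho)=S(\rho0)+S(\rho1)$ for all $\rho$; $\bot$ is the empty string. For a martingale $S$ and $\rho\in2^{<\omega}$, $\mathrm{Var}(S\mid\rho)=\lim_{t\to\infty}2^{-(t-|\rho|)}\sum_{\sigma\in 2^t,\ \sigma\succeq\rho}(S(\sigma)-S(\rho))^2$. *)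

(* Defs.v *)
From Stdlib Require Import Reals List.
From Coquelicot Require Import Coquelicot.
Open Scope R_scope.

(* Binary strings 2^{<omega} are lists of booleans; rho0 = rho ++ [false],
   rho1 = rho ++ [true]; bot = nil. *)
Definition bstr := list bool.

Fixpoint strings (t : nat) : list bstr :=
  match t with
  | O => nil :: nil
  | S t' => flat_map (fun s => (s ++ false :: nil) :: (s ++ true :: nil) :: nil) (strings t')
  end.

Fixpoint prefixb (rho sigma : bstr) : bool :=
  match rho, sigma with
  | nil, _ => true
  | a :: r, b :: s => Bool.eqb a b && prefixb r s
  | _ :: _, nil => false
  end.

Definition sumR (l : list R) : R := fold_right Rplus 0 l.

Definition martingale (S : bstr -> R) : Prop :=
  forall rho, 0 <= S rho /\ 2 * S rho = S (rho ++ false :: nil) + S (rho ++ true :: nil).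

(* Var(S | rho) = lim_t 2^{-(t-|rho|)} sum_{sigma in 2^t, sigma extends rho} (S sigma - S rho)^2,
   as an extended real (the sequence is nondecreasing for t >= |rho|; for t < |rho|
   the sum is empty). *)
Definition CondVar (S : bstr -> R) (rho : bstr) : Rbar :=
  Lim_seq (fun t =>
    / 2 ^ (t - length rho) *
    sumR (map (fun sigma => (S sigma - S rho) ^ 2)
              (filter (prefixb rho) (strings t)))).

(* Main.v *)
Require Import Defs.
From Stdlib Require Import Reals List Lia Lra.
From Coquelicot Require Import Coquelicot.
Open Scope R_scope.

Lemma strings_S m : strings (S m) =
  map (cons false) (strings m) ++ map (cons true) (strings m).
Proof.
  induction m as [|m IH]; [reflexivity|].
  change (strings (S (S m))) with
    (flat_map (fun s => (s ++ false :: nil) :: (s ++ true :: nil) :: nil) (strings (S m))).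
  rewrite IH at 1. rewrite flat_map_app.
  assert (Hf : forall b l, flat_map (fun s => (s ++ false :: nil) :: (s ++ true :: nil) :: nil) (map (cons b) l)
     = map (cons b) (flat_map (fun s => (s ++ false :: nil) :: (s ++ true :: nil) :: nil) l)).
  { intros b l; induction l as [|x l IHl]; simpl; [reflexivity|]. rewrite IHl. reflexivity. }
  rewrite !Hf. reflexivity.
Qed.

Lemma sumR_app l1 l2 : sumR (l1 ++ l2) = sumR l1 + sumR l2.
Proof. induction l1; simpl; [ring|]. unfold sumR in *; simpl. rewrite IHl1. ring. Qed.

Definition avg (m : nat) (G : bstr -> R) : R := / 2 ^ m * sumR (map G (strings m)).

Lemma avg_0 G : avg 0 G = G nil.
Proof. unfold avg, sumR; simpl. field. Qed.

Lemma avg_S m G : avg (S m) G =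
  (avg m (fun s => G (false :: s)) + avg m (fun s => G (true :: s))) / 2.
Proof.
  unfold avg. rewrite strings_S, map_app, sumR_app, !map_map.
  assert (2 ^ m <> 0) by (apply pow_nonzero; lra).
  simpl pow. unfold bstr in *. field. auto.
Qed.

Lemma avg_ext m G H : (forall s, G s = H s) -> avg m G = avg m H.
Proof. intros E. unfold avg. f_equal. f_equal. apply map_ext. auto. Qed.

Lemma avg_le m G H : (forall s, G s <= H s) -> avg m G <= avg m H.
Proof.
  revert G H; induction m; intros G H E.
  - rewrite !avg_0; auto.
  - rewrite !avg_S. assert (h1 := IHm (fun s => G (false :: s)) (fun s => H (false :: s)) (fun s => E _)).
    assert (h2 := IHm (fun s => G (true :: s)) (fun s => H (true :: s)) (fun s => E _)). lra.
Qed.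

Lemma avg_lin m G H a b : avg m (fun s => a * G s + H s + b) = a * avg m G + avg m H + b.
Proof.
  revert G H; induction m; intros G H.
  - rewrite !avg_0; auto.
  - rewrite !avg_S, IHm, IHm. lra.
Qed.

Lemma avg_split T m G : avg (T + m) G = avg T (fun t => avg m (fun s => G (t ++ s))).
Proof.
  revert G; induction T; intros G.
  - rewrite avg_0. reflexivity.
  - change (S T + m)%nat with (S (T + m)). rewrite !avg_S, !IHT. reflexivity.
Qed.

Lemma avg_lim T (G : nat -> bstr -> R) (g : bstr -> R) :
  (forall t, is_lim_seq (fun n => G n t) (g t)) ->
  is_lim_seq (fun n => avg T (G n)) (avg T g).
Proof.
  revert G g; induction T; intros G g HG.
  - rewrite avg_0. eapply is_lim_seq_ext; [|apply HG]. intros; rewrite avg_0; auto.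
  - rewrite avg_S. eapply is_lim_seq_ext. { intros n; symmetry; apply avg_S. }
    unfold Rdiv. apply (is_lim_seq_scal_r _ (/2) (Finite _)).
    apply is_lim_seq_plus'.
    + apply (IHT (fun n s => G n (false :: s))). auto.
    + apply (IHT (fun n s => G n (true :: s))). auto.
Qed.

Lemma strings_len T t : In t (strings T) -> length t = T.
Proof.
  revert t; induction T; intros t H.
  - simpl in H. destruct H as [<-|[]]; auto.
  - rewrite strings_S in H. apply in_app_or in H.
    destruct H as [H|H]; apply in_map_iff in H; destruct H as [x [<- Hx]]; simpl; f_equal; auto.
Qed.

Lemma filter_true (l : list bstr) : filter (fun _ => true) l = l.
Proof. induction l; simpl; congruence. Qed.

Lemma filter_strings r m :
  filter (prefixb r) (strings (length r + m)) = map (app r) (strings m).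
Proof.
  induction r as [|b r IH].
  - simpl. change (prefixb nil) with (fun _ : bstr => true). rewrite filter_true.
    symmetry. rewrite <- map_id. apply map_ext. auto.
  - change (length (b :: r) + m)%nat with (S (length r + m)). rewrite strings_S, filter_app.
    assert (Hm : forall b' l, filter (prefixb (b :: r)) (map (cons b') l) =
       if Bool.eqb b b' then map (cons b') (filter (prefixb r) l) else nil).
    { intros b' l. induction l as [|x l IHl]; cbn [map filter].
      - destruct (Bool.eqb b b'); auto.
      - rewrite IHl. destruct b, b'; simpl; destruct (prefixb r x); auto. }
    rewrite !Hm, IH.
    destruct b; simpl; rewrite ?app_nil_r, map_map; apply map_ext; auto.
Qed.

Lemma avg_const m b : avg m (fun _ => b) = b.
Proof. induction m. - rewrite avg_0; auto. - rewrite avg_S, IHm. lra. Qed.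

Lemma avg_scal m G a : avg m (fun s => a * G s) = a * avg m G.
Proof.
  rewrite (avg_ext m _ (fun s => a * G s + (fun _ => 0) s + 0)) by (intros; simpl; ring).
  rewrite avg_lin, avg_const. ring.
Qed.

Definition Aq (Mg : bstr -> R) r m := avg m (fun s => (Mg (r ++ s) - Mg r) ^ 2).

Lemma CondVar_eq Mg r : CondVar Mg r = Lim_seq (Aq Mg r).
Proof.
  unfold CondVar. rewrite <- (Lim_seq_incr_n _ (length r)).
  apply Lim_seq_ext; intro n.
  replace (n + length r - length r)%nat with n by lia.
  rewrite Nat.add_comm, filter_strings, map_map. reflexivity.
Qed.

Lemma mart_avg Mg : martingale Mg -> forall m a, avg m (fun s => Mg (a ++ s)) = Mg a.
Proof.
  intros HM m; induction m; intros a.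
  - rewrite avg_0, app_nil_r; auto.
  - rewrite avg_S.
    rewrite (avg_ext m _ (fun s => Mg ((a ++ false :: nil) ++ s)))
      by (intros; rewrite <- app_assoc; reflexivity).
    rewrite (avg_ext m (fun s => Mg (a ++ true :: s)) (fun s => Mg ((a ++ true :: nil) ++ s)))
      by (intros; rewrite <- app_assoc; reflexivity).
    rewrite !IHm. destruct (HM a). lra.
Qed.

Lemma expand Mg : martingale Mg -> forall m a c,
  avg m (fun s => (Mg (a ++ s) - c) ^ 2) = Aq Mg a m + (Mg a - c) ^ 2.
Proof.
  intros HM m a c.
  rewrite (avg_ext m _ (fun s => 1 * (Mg (a ++ s) - Mg a) ^ 2
     + (2 * (Mg a - c)) * Mg (a ++ s) + ((Mg a - c) ^ 2 - 2 * (Mg a - c) * Mg a)))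
    by (intros; ring).
  rewrite avg_lin, avg_scal, mart_avg by auto. unfold Aq. ring.
Qed.

Lemma pythag Mg : martingale Mg -> forall r T m,
  Aq Mg r (T + m) = avg T (fun t => Aq Mg (r ++ t) m) + Aq Mg r T.
Proof.
  intros HM r T m. unfold Aq at 1. rewrite avg_split.
  rewrite (avg_ext T _ (fun t => 1 * Aq Mg (r ++ t) m + (Mg (r ++ t) - Mg r) ^ 2 + 0)).
  - rewrite avg_lin. unfold Aq at 3. ring.
  - intros t. rewrite Rmult_1_l, Rplus_0_r, <- expand by auto.
    apply avg_ext. intros s. rewrite app_assoc. reflexivity.
Qed.

Lemma Aq_nonneg Mg r m : 0 <= Aq Mg r m.
Proof.
  unfold Aq. rewrite <- (avg_const m 0). apply avg_le. intros; apply pow2_ge_0.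
Qed.

Lemma Aq_incr Mg : martingale Mg -> forall r n, Aq Mg r n <= Aq Mg r (S n).
Proof.
  intros HM r n. replace (S n) with (n + 1)%nat by lia. rewrite pythag by auto.
  assert (0 <= avg n (fun t => Aq Mg (r ++ t) 1)).
  { rewrite <- (avg_const n 0). apply avg_le. intros; apply Aq_nonneg. }
  lra.
Qed.

Fixpoint ext (F : bstr -> R) (k : nat) (r : bstr) : R :=
  match k with
  | O => F r
  | S k => (ext F k (r ++ false :: nil) + ext F k (r ++ true :: nil)) / 2
  end.

Lemma ext_avg F k r : ext F k r = avg k (fun s => F (r ++ s)).
Proof.
  revert r; induction k; intros r.
  - rewrite avg_0, app_nil_r; reflexivity.
  - simpl ext. rewrite avg_S, !IHk. f_equal. f_equal; apply avg_ext; intros s;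
    rewrite <- app_assoc; reflexivity.
Qed.

Definition Dm F T r := if Nat.leb T (length r) then F (firstn T r) else ext F (T - length r) r.

Lemma Dm_le F T r : (length r <= T)%nat -> Dm F T r = ext F (T - length r) r.
Proof.
  intros H. unfold Dm. destruct (Nat.leb_spec T (length r)).
  - replace (T - length r)%nat with O by lia. simpl. rewrite firstn_all2 by lia. reflexivity.
  - reflexivity.
Qed.

Lemma Dm_mart F T r : 2 * Dm F T r = Dm F T (r ++ false :: nil) + Dm F T (r ++ true :: nil).
Proof.
  destruct (Nat.leb_spec T (length r)).
  - unfold Dm. rewrite !length_app. simpl length.
    destruct (Nat.leb_spec T (length r)); try lia.
    destruct (Nat.leb_spec T (length r + 1)); try lia.
    rewrite !firstn_app. replace (T - length r)%nat with O by lia. simpl.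
    rewrite !app_nil_r. ring.
  - rewrite Dm_le by lia. rewrite !Dm_le by (rewrite length_app; simpl; lia).
    rewrite !length_app. simpl length.
    replace (T - length r)%nat with (S (T - (length r + 1))) by lia. simpl ext. field.
Qed.

Lemma Dm_lb F T d : (forall r, d <= F r) -> forall r, d <= Dm F T r.
Proof.
  intros HF r. unfold Dm. destruct (Nat.leb T (length r)); auto.
  rewrite ext_avg, <- (avg_const (T - length r) d). apply avg_le. auto.
Qed.

Theorem lemma3p4 (S' : bstr -> R) (c : R) :
  martingale S' ->
  Rbar_lt (CondVar S' nil) p_infty ->
  c > S' nil ->
  forall chat : R, 0 <= chat ->
  exists S : bstr -> R,
    martingale S /\
    S nil < c /\
    (forall rho, S rho > S' rho) /\
    (exists t : nat, forall rho, In rho (strings t) ->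
       S rho > S' rho + chat * sqrt (real (CondVar S' rho))).
Proof.
  intros HM HV Hc chat Hchat.
  assert (incr := Aq_incr S' HM).
  rewrite CondVar_eq in HV.
  pose proof (Lim_seq_correct _ (ex_lim_seq_incr _ (incr nil))) as HL.
  destruct (Lim_seq (Aq S' nil)) as [L| |] eqn:EL; simpl in HV; try contradiction.
  2:{ exfalso. assert (H := is_lim_seq_le (fun _ => 0) (Aq S' nil) 0 m_infty
        (fun n => Aq_nonneg S' nil n) (is_lim_seq_const 0) HL). simpl in H. auto. }
  assert (HLb := is_lim_seq_incr_compare _ _ HL (incr nil)).
  set (eps := c - S' nil).
  assert (Heps : 0 < eps) by (unfold eps; lra).
  set (eta := eps / (4 * (chat + 1))).
  assert (Heta : 0 < eta) by (unfold eta; apply Rdiv_lt_0_compat; lra).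
  set (gam := eps * eta / (2 * (chat + 1))).
  assert (Hgam : 0 < gam) by (unfold gam; apply Rdiv_lt_0_compat; nra).
  apply is_lim_seq_spec in HL.
  destruct (HL (mkposreal gam Hgam)) as [T HT].
  specialize (HT T (le_n T)). simpl in HT.
  apply Rabs_def2 in HT. destruct HT as [HT1 HT2].
  set (h := fun r => real (Lim_seq (Aq S' r))).
  set (B := fun r n => match Lim_seq (Aq S' r) with Finite _ => Aq S' r n | _ => 0 end).
  assert (HB : forall r, is_lim_seq (fun n => B r n) (h r)).
  { intros r. unfold B, h.
    pose proof (Lim_seq_correct _ (ex_lim_seq_incr _ (incr r))) as Hr.
    destruct (Lim_seq (Aq S' r)); simpl; auto; apply is_lim_seq_const. }
  assert (HBle : forall r n, 0 <= B r n <= Aq S' r n).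
  { intros r n. unfold B. destruct (Lim_seq (Aq S' r)); split;
    try apply Aq_nonneg; lra. }
  assert (hnn : forall r, 0 <= h r).
  { intros r. assert (H := is_lim_seq_le (fun _ => 0) (fun n => B r n) 0 (h r)
        (fun n => proj1 (HBle r n)) (is_lim_seq_const 0) (HB r)). simpl in H. auto. }
  assert (Havg : avg T h <= L - Aq S' nil T).
  { assert (H1 := avg_lim T (fun n r => B r n) h HB).
    assert (Hn : forall n, avg T (fun r => B r n) <= L - Aq S' nil T).
    { intros n. apply Rle_trans with (avg T (fun r => Aq S' r n)).
      - apply avg_le. intros; apply HBle.
      - assert (E := pythag S' HM nil T n). simpl in E.
        specialize (HLb (T + n)%nat). lra. }
    assert (H := is_lim_seq_le _ (fun _ => L - Aq S' nil T) _ _ Hn H1 (is_lim_seq_const _)).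
    simpl in H; exact H. }
  set (d := eps / 4).
  set (F := fun r => d + chat * (h r / (2 * eta) + eta / 2)).
  assert (HF : forall r, d <= F r).
  { intros r. unfold F. assert (0 <= h r / (2 * eta) + eta / 2).
    { apply Rplus_le_le_0_compat; [apply Rdiv_le_0_compat|]; auto; lra. }
    nra. }
  assert (Hd : 0 < d) by (unfold d; lra).
  assert (HD := Dm_lb F T d HF).
  exists (fun r => S' r + Dm F T r). split; [|split; [|split]].
  - intros r. destruct (HM r) as [H0 H2]. split.
    + specialize (HD r). lra.
    + rewrite (Rmult_plus_distr_l 2), Dm_mart. lra.
  - rewrite Dm_le by (simpl; lia). simpl length. rewrite Nat.sub_0_r, ext_avg.
    change (S' nil + avg T (fun s => F s) < c).
    rewrite (avg_ext T _ (fun s => (chat / (2 * eta)) * h s + (fun _ => 0) s + (d + chat * eta / 2)))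
      by (intros; unfold F; field; lra).
    rewrite avg_lin, avg_const.
    assert (Hk : chat / (2 * eta) * avg T h <= chat / (2 * eta) * gam).
    { apply Rmult_le_compat_l; [apply Rdiv_le_0_compat; lra | lra]. }
    assert (E1 : chat / (2 * eta) * gam = chat / (chat + 1) * eps / 4)
      by (unfold gam; field; lra).
    assert (E2 : chat * eta / 2 = chat / (chat + 1) * eps / 8)
      by (unfold eta; field; lra).
    assert (Hk1 : chat / (chat + 1) < 1).
    { apply (Rmult_lt_reg_r (chat + 1)); [lra|]. field_simplify; lra. }
    assert (Hk0 : 0 <= chat / (chat + 1)) by (apply Rdiv_le_0_compat; lra).
    assert (chat / (chat + 1) * eps <= eps) by nra.
    unfold d in *. unfold eps in *. lra.
  - intros r. specialize (HD r). lra.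
  - exists T. intros r Hr. apply strings_len in Hr.
    rewrite Dm_le by lia. rewrite Hr, Nat.sub_diag. simpl ext.
    rewrite CondVar_eq. fold (h r). unfold F.
    assert (Hs : sqrt (h r) <= h r / (2 * eta) + eta / 2).
    { assert (E : h r / (2 * eta) + eta / 2 - sqrt (h r) = (sqrt (h r) - eta) ^ 2 / (2 * eta)).
      { rewrite <- (sqrt_sqrt (h r) (hnn r)) at 1. field. lra. }
      assert (0 <= (sqrt (h r) - eta) ^ 2 / (2 * eta))
        by (apply Rdiv_le_0_compat; [apply pow2_ge_0 | lra]).
      lra. }
    assert (chat * sqrt (h r) <= chat * (h r / (2 * eta) + eta / 2))
      by (apply Rmult_le_compat_l; auto).
    lra.
Qed.
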